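(* Suppose that for some $j\in\{2,\dots,n-1\}$ and $\ell>0$ the offline optimal solution takes the form of Structure 1 or Structure 2 on the interval $[j,j+\ell-1]\subseteq\{2,\dots,n-1\}$. Then the optimal dual variable satisfies $\lambda\le \frac{(B+G)\ell}{2}$.
   Context: Setting: $n\ge 3$, $B\ge 1$, $G\ge B$, labels $y_1,\dots,y_n\in[-G,G]$; $[a,b]=\{a,\dots,b\}$. Given $C_n>0$, the offline optimal $u_1,\dots,u_n$ is an optimal solution of: minimize $\frac12\sum_{t=1}^n(y_t-\tilde u_t)^2$ over $\tilde u\in\mathbb R^n$ subject to $\sum_{t=2}^{n}|\tilde u_t-\tilde u_{t-1}|\le C_n$ and $-B\le\tilde u_t\le B$ for all $t$. Let $\lambda\ge 0$ be an optimal dual variable for the total variation constraint and $\gamma_t^-,\gamma_t^+\ge0$ optimal dual variables for $-B\le\tilde u_t$ and $\tilde u_t\le B$. They satisfy the KKT conditions: there are $s_t\in[-1,1]$ ($t=1,\dots,n-1$) with $s_t=\mathrm{sign}(u_{t+1}-u_t)$ whenever $u_{t+1}\ne u_t$, and with $s_0=s_n=0$, such that $u_t-y_t=\lambda(s_t-s_{t-1})+\gamma_t^--\gamma_t^+$ for all $t\in[n]$, $\lambda(\sum_{t=2}^n|u_t-u_{t-1}|-C_n)=0$, $\gamma_t^-(u_t+B)=0$, $\gamma_t^+(u_t-B)=0$. Structure 1 on $[a,b]\subseteq\{2,\dots,n-1\}$: $u_j=u_a\in(-B,B)$ for all $j\in[a,b]$, $u_b>u_{b+1}$ and $u_a>u_{a-1}$.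 Structure 2 on $[a,b]\subseteq\{2,\dots,n-1\}$: $u_j=u_a\in(-B,B)$ for all $j\in[a,b]$, $u_b<u_{b+1}$ and $u_a<u_{a-1}$. *)

(* Defs.v *)
(* R an abstract real field; sequences indexed 1..n as nat -> R. *)
From mathcomp Require Import all_boot all_order all_algebra.
Set Implicit Arguments. Unset Strict Implicit. Unset Printing Implicit Defensive.
Import Order.TTheory GRing.Theory Num.Theory.
Local Open Scope ring_scope.

Definition objective {R : realFieldType} (n : nat) (y v : nat -> R) : R :=
  2^-1 * \sum_(1 <= t < n.+1) (y t - v t) ^+ 2.

Definition total_variation {R : realFieldType} (n : nat) (v : nat -> R) : R :=
  \sum_(2 <= t < n.+1) `|v t - v t.-1|.

Definition feasible {R : realFieldType} (n : nat) (B Cn : R) (v : nat -> R) : Prop :=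
  total_variation n v <= Cn /\ (forall t, (1 <= t <= n)%N -> - B <= v t <= B).

Definition offline_optimal {R : realFieldType} (n : nat) (B Cn : R) (y u : nat -> R)
  : Prop :=
  feasible n B Cn u /\
  (forall v : nat -> R, feasible n B Cn v -> objective n y u <= objective n y v).

(* KKT conditions with multipliers lambda (TV constraint), gamma^- / gamma^+
   (box constraints) and subgradient signs s_0..s_n. *)
Definition KKT {R : realFieldType} (n : nat) (B Cn : R) (y u : nat -> R)
  (lam : R) (gm gp : nat -> R) : Prop :=
  0 <= lam /\
  (forall t, (1 <= t <= n)%N -> 0 <= gm t /\ 0 <= gp t) /\
  exists s : nat -> R,
    s 0%N = 0 /\ s n = 0 /\
    (forall t, (1 <= t <= n.-1)%N -> -1 <= s t <= 1) /\
    (forall t, (1 <= t <= n.-1)%N -> u t.+1 != u t -> s t = Num.sg (u t.+1 - u t)) /\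
    (forall t, (1 <= t <= n)%N ->
        u t - y t = lam * (s t - s t.-1) + gm t - gp t) /\
    lam * (total_variation n u - Cn) = 0 /\
    (forall t, (1 <= t <= n)%N -> gm t * (u t + B) = 0 /\ gp t * (u t - B) = 0).

Definition structure1 {R : realFieldType} (u : nat -> R) (B : R) (a b : nat) : Prop :=
  (forall i, (a <= i <= b)%N -> u i = u a) /\ - B < u a < B /\
  u b.+1 < u b /\ u a.-1 < u a.

Definition structure2 {R : realFieldType} (u : nat -> R) (B : R) (a b : nat) : Prop :=
  (forall i, (a <= i <= b)%N -> u i = u a) /\ - B < u a < B /\
  u b < u b.+1 /\ u a < u a.-1.

(* Main.v *)
Require Import Defs.
From mathcomp Require Import all_boot all_order all_algebra.
From mathcomp Require Import zify ring lra.
Import Order.TTheory GRing.Theory Num.Theory.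
Local Open Scope ring_scope.

Theorem lemma2 (R : realFieldType) (n : nat) (B G Cn : R) (y u : nat -> R)
  (lam : R) (gm gp : nat -> R) (j l : nat) :
  (3 <= n)%N -> 1 <= B -> B <= G ->
  (forall t, (1 <= t <= n)%N -> - G <= y t <= G) ->
  0 < Cn ->
  offline_optimal n B Cn y u ->
  KKT n B Cn y u lam gm gp ->
  (0 < l)%N -> (2 <= j)%N -> (j + l - 1 <= n - 1)%N ->
  structure1 u B j (j + l - 1) \/ structure2 u B j (j + l - 1) ->
  lam <= (B + G) * l%:R / 2.
Proof.
move=> n3 B1 BG Hy _ _ [lam0 [_ [s [s0 [sn [sb [ssg [Heq [_ Hcs]]]]]]]]] l0 j2 jl Hs.
have [Hc Hin] : (forall i, (j <= i <= j + l - 1)%N -> u i = u j) /\ - B < u j < B.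
  by case: Hs => -[H1 [H2 _]].
move/andP: Hin => [HB1 HB2].
have Hint : forall t, (j <= t < (j + l - 1).+1)%N -> u t - y t = lam * (s t.+1.-1 - s t.-1).
  move=> t /andP[t1 t2].
  have tn : (1 <= t <= n)%N by apply/andP; split; lia.
  have ut : u t = u j by apply: Hc; apply/andP; split; lia.
  have [g1 g2] := Hcs t tn.
  have gm0 : gm t = 0.
    apply/eqP; move/eqP: g1; rewrite mulf_eq0 => /orP[//|/eqP E].
    by exfalso; move: E; rewrite ut; lra.
  have gp0 : gp t = 0.
    apply/eqP; move/eqP: g2; rewrite mulf_eq0 => /orP[//|/eqP E].
    by exfalso; move: E; rewrite ut; lra.
  by rewrite Heq // gm0 gp0 /=; ring.
have Hsum : \sum_(j <= t < (j + l - 1).+1) (u t - y t)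
   = lam * s (j + l - 1)%N - lam * s j.-1.
  have -> : (lam * s (j + l - 1)%N = (fun k : nat => lam * s k.-1) (j + l - 1)%N.+1) by [].
  apply: (telescope_sumr_eq (fun k : nat => lam * s k.-1)); first lia.
  by move=> k Hk; rewrite Hint //= mulrBr.
have Hbd : forall t, (j <= t < (j + l - 1).+1)%N -> `|u t - y t| <= B + G.
  move=> t /andP[t1 t2].
  have tn : (1 <= t <= n)%N by apply/andP; split; lia.
  have ut : u t = u j by apply: Hc; apply/andP; split; lia.
  have /andP[y1 y2] := Hy t tn.
  rewrite ut ler_norml; apply/andP; split; lra.
have Hcnt : ((j + l - 1).+1 - j = l)%N by lia.
have Hup : \sum_(j <= t < (j + l - 1).+1) (u t - y t) <= (B + G) * l%:R.
  apply: le_trans (_ : \sum_(j <= t < (j + l - 1).+1) (B + G) <= _).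
    by apply: ler_sum_nat => t Ht; exact: le_trans (ler_norm _) (Hbd t Ht).
  by rewrite sumr_const_nat Hcnt mulr_natr.
have Hlo : - ((B + G) * l%:R) <= \sum_(j <= t < (j + l - 1).+1) (u t - y t).
  rewrite lerNl -sumrN.
  apply: le_trans (_ : \sum_(j <= t < (j + l - 1).+1) (B + G) <= _).
    by apply: ler_sum_nat => t Ht; apply: le_trans (ler_norm _) _; rewrite normrN; exact: Hbd.
  by rewrite sumr_const_nat Hcnt mulr_natr.
have b1 : (1 <= j + l - 1 <= n.-1)%N by apply/andP; split; lia.
have a1 : (1 <= j.-1 <= n.-1)%N by apply/andP; split; lia.
have ej : j.-1.+1 = j by lia.
have eb : (j + l - 1).+1 = j + l by lia.
case: Hs => -[_ [_ [H3 H4]]].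
- have sbv : s (j + l - 1)%N = -1.
    rewrite ssg //; last by rewrite lt_eqF.
    by rewrite ltr0_sg // subr_lt0.
  have sav : s j.-1 = 1.
    rewrite ssg //; last by rewrite ej gt_eqF.
    by rewrite ej gtr0_sg // subr_gt0.
  move: Hsum Hlo; rewrite sbv sav => -> ; lra.
- have sbv : s (j + l - 1)%N = 1.
    rewrite ssg //; last by rewrite gt_eqF.
    by rewrite gtr0_sg // subr_gt0.
  have sav : s j.-1 = -1.
    rewrite ssg //; last by rewrite ej lt_eqF.
    by rewrite ej ltr0_sg // subr_lt0.
  move: Hsum Hup; rewrite sbv sav => -> ; lra.
Qed.
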